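(* For every $\zeta=\sum_{j=1}^k x_je_j\in E_k$ and every $t\in\mathbb{C}$ with $t\neq\xi_u$ for all $u=1,\ldots,m$ (where $\xi_u=f_u(\zeta)$), the element $te_1-\zeta$ is invertible in $\mathbb{A}_n^m$ and $$(te_1-\zeta)^{-1}=\sum_{u=1}^m\frac{1}{t-\xi_u}\,I_u+\sum_{s=m+1}^{n}\sum_{r=2}^{s-m+1}\frac{Q_{r,s}}{(t-\xi_{u_s})^r}\,I_s,$$ where the coefficients $Q_{r,s}$ are given recursively by $$Q_{2,s}=T_s,\qquad Q_{r,s}=\sum_{q=r+m-2}^{s-1}Q_{r-1,q}\,B_{q,s},\quad r=3,4,\ldots,s-m+1,$$ with $$T_s:=\sum_{j=2}^k x_j a_{js},\qquad B_{q,s}:=\sum_{p=m+1}^{s-1}T_p\,\Upsilon^{p}_{q,s},$$ and $u_s$ is the index from multiplication rule 3.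
   Context: Fix integers $1\le m\le n$. $\mathbb{A}_n^m$ is an $n$-dimensional commutative associative algebra with unit over $\mathbb{C}$ having a basis $\{I_r\}_{r=1}^n$ with the multiplication rules: (1) for $r,s\in\{1,\ldots,m\}$: $I_rI_s=0$ if $r\ne s$ and $I_rI_r=I_r$; (2) for $r,s\in\{m+1,\ldots,n\}$: $I_rI_s=\sum_{p=\max\{r,s\}+1}^n\Upsilon^s_{r,p}I_p$ with structure constants $\Upsilon^s_{r,p}\in\mathbb{C}$ (so $\Upsilon^{p}_{q,s}$ is the coefficient of $I_s$ in $I_qI_p$); (3) for each $s\in\{m+1,\ldots,n\}$ there is a unique $u_s\in\{1,\ldots,m\}$ such that for all $r\in\{1,\ldots,m\}$: $I_rI_s=I_s$ if $r=u_s$ and $I_rI_s=0$ if $r\ne u_s$. The unit is $1=\sum_{u=1}^mI_u$. For $u=1,\ldots,m$, $f_u:\mathbb{A}_n^m\to\mathbb{C}$ is the linear functional $f_u(\sum_r\lambda_rI_r)=\lambda_u$ (it is continuous and multiplicative). Let $2\le k\le 2n$ and let $e_1=1=\sum_{r=1}^mI_r$, $e_j=\sum_{r=1}^n a_{jr}I_r$ ($a_{jr}\in\mathbb{C}$, $j=2,\ldots,k$) be linearly independent over $\mathbb{R}$. $E_k=\{\zeta=\sum_{j=1}^kx_je_j: x_j\in\mathbb{R}\}$, and $\xi_u:=f_u(\zeta)=x_1+\sum_{j=2}^kx_ja_{ju}$. *)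

(* Defs.v *)
(* The field C stands for the complex numbers: it is an
   arbitrary numClosedFieldType (C itself is not available as an instance). *)
From HB Require Import structures.
From mathcomp Require Import all_boot all_order all_algebra.
Set Implicit Arguments. Unset Strict Implicit. Unset Printing Implicit Defensive.
Import Order.TTheory GRing.Theory Num.Theory.
Local Open Scope ring_scope.

Section AnmDefs.
Variable C : numClosedFieldType.

(* An element sum_r lambda_r I_r of A_n^m is represented by its coefficient
   function r |-> lambda_r; only indices 1 <= r <= n are meaningful. *)
Definition Anm_eq (n : nat) (x y : nat -> C) : Prop :=
  forall r : nat, (1 <= r <= n)%N -> x r = y r.

(* Structure constant: coefficient of I_p in I_i I_j (rules (1)-(3));
   Ups q p s = Upsilon^p_{q,s} = coefficient of I_s in I_q I_p, for q,p > m. *)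
Definition Anm_cst (m : nat) (u : nat -> nat) (Ups : nat -> nat -> nat -> C)
  (i j p : nat) : C :=
  if (i <= m)%N then
    if (j <= m)%N then ((i == j) && (p == i))%:R
    else ((u j == i) && (p == j))%:R
  else if (j <= m)%N then ((u i == j) && (p == i))%:R
  else if (maxn i j < p)%N then Ups i j p else 0.

Definition Anm_mul (n m : nat) (u : nat -> nat) (Ups : nat -> nat -> nat -> C)
  (x y : nat -> C) : nat -> C :=
  fun p => \sum_(1 <= i < n.+1) \sum_(1 <= j < n.+1) x i * y j * Anm_cst m u Ups i j p.

Definition Anm_one (m : nat) : nat -> C := fun r => ((0 < r)%N && (r <= m)%N)%:R.

Definition evec (m : nat) (a : nat -> nat -> C) (j : nat) : nat -> C :=
  if j == 1%N then Anm_one m else a j.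

Definition zetaA (k m : nat) (a : nat -> nat -> C) (x : nat -> C) : nat -> C :=
  fun r => \sum_(1 <= j < k.+1) x j * evec m a j r.

Definition Tco (k : nat) (a : nat -> nat -> C) (x : nat -> C) (s : nat) : C :=
  \sum_(2 <= j < k.+1) x j * a j s.

Definition Bco (k m : nat) (a : nat -> nat -> C) (x : nat -> C)
  (Ups : nat -> nat -> nat -> C) (q s : nat) : C :=
  \sum_(m.+1 <= p < s) Tco k a x p * Ups q p s.

(* Qaux i s = Q_{i+2,s}:  Q_{2,s} = T_s,
   Q_{r,s} = sum_{q=r+m-2}^{s-1} Q_{r-1,q} B_{q,s}  (r >= 3). *)
Fixpoint Qaux (k m : nat) (a : nat -> nat -> C) (x : nat -> C)
  (Ups : nat -> nat -> nat -> C) (i s : nat) : C :=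
  match i with
  | 0 => Tco k a x s
  | i'.+1 => \sum_(i'.+2 + m - 1 <= q < s)
               Qaux k m a x Ups i' q * Bco k m a x Ups q s
  end.

Definition Qco (k m : nat) (a : nat -> nat -> C) (x : nat -> C)
  (Ups : nat -> nat -> nat -> C) (r s : nat) : C :=
  Qaux k m a x Ups (r - 2) s.

End AnmDefs.

(* Main.v *)
Require Import Defs.
From HB Require Import structures.
From mathcomp Require Import all_boot all_order all_algebra zify.
Set Implicit Arguments. Unset Strict Implicit. Unset Printing Implicit Defensive.
Import Order.TTheory GRing.Theory Num.Theory.
Local Open Scope ring_scope.

Lemma sum_only (C : numClosedFieldType) (a b p : nat) (F : nat -> C) :
  (a <= p < b)%N -> (forall j, (a <= j < b)%N -> j != p -> F j = 0) ->
  \sum_(a <= j < b) F j = F p.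
Proof.
move=> hp h0.
rewrite (bigD1_seq p) /= ?mem_index_iota ?iota_uniq // big1_seq ?addr0 //.
by move=> i /andP[ip]; rewrite mem_index_iota => hi; apply: h0.
Qed.

Definition Mc (C : numClosedFieldType) (m : nat) (c : nat -> C) : nat -> C :=
  fun r => if (0 < r <= m)%N then c r else 0.

Lemma mulMc (C : numClosedFieldType) n m u (Ups : nat -> nat -> nat -> C) c y p :
  (m <= n)%N -> (forall s, (m < s <= n)%N -> (1 <= u s <= m)%N) -> (0 < p <= n)%N ->
  Anm_mul n m u Ups (Mc m c) y p = c (if (p <= m)%N then p else u p) * y p.
Proof.
move=> mn hu /andP[p0 pn].
set i0 := (if (p <= m)%N then p else u p).
have hi0 : (0 < i0 <= m)%N.
  rewrite /i0; case: ifP => pm; first by rewrite p0.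
  by apply: hu; rewrite pn ltnNge pm.
rewrite /Anm_mul (@sum_only _ _ _ i0).
- rewrite (@sum_only _ _ _ p).
  + rewrite /Mc hi0 /Anm_cst.
    case/andP: hi0 => _ ->.
    by rewrite /i0; case: leqP => pm; rewrite !eqxx mulr1.
  + by rewrite p0 ltnS.
  + move=> j _ jp; rewrite /Anm_cst.
    case/andP: hi0 => _ ->.
    case: ifP => _.
      case: (p =P i0) => [e|]; last by rewrite andbF mulr0.
      by rewrite -e eq_sym (negbTE jp) mulr0.
    by rewrite (eq_sym p j) (negbTE jp) andbF mulr0.
- by case/andP: hi0 => a b; rewrite a ltnS (leq_trans b mn).
- move=> i /andP[i1 iN] ii0.
  rewrite /Mc; case: ifP => hi; last by apply: big1 => j _; rewrite !mul0r.
  apply: big1 => j _; rewrite /Anm_cst.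
  case/andP: hi => _ im; rewrite im.
  case: ifP => jm.
    case: (p =P i) => [pi|]; last by rewrite andbF mulr0.
    by move: ii0; rewrite /i0 pi im eqxx.
  case: (p =P j) => [pj|]; last by rewrite andbF mulr0.
  case: (u j =P i) => [uj|]; last by rewrite mulr0.
  by move: ii0; rewrite /i0 pj jm uj eqxx.
Qed.

Lemma sum_split_lo (C : numClosedFieldType) (lo lo' hi : nat) (H : nat -> C) :
  (lo <= lo')%N -> (forall a, (lo <= a < lo')%N -> H a = 0) ->
  \sum_(lo <= a < hi) H a = \sum_(lo' <= a < hi) H a.
Proof.
move=> l1 h0; case: (leqP hi lo') => hh.
  rewrite (big_geq hh) big_nat big1 // => a /andP[la ah]; apply: h0.
  by rewrite la (leq_trans ah hh).
rewrite (big_cat_nat (n := lo')) ?(ltnW hh) //= big_nat big1 ?add0r //.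
Qed.

Lemma sum_split_hi (C : numClosedFieldType) (lo hi hi' : nat) (H : nat -> C) :
  (lo <= hi)%N -> (hi <= hi')%N -> (forall a, (hi <= a < hi')%N -> H a = 0) ->
  \sum_(lo <= a < hi) H a = \sum_(lo <= a < hi') H a.
Proof.
move=> l1 l2 h0.
rewrite [RHS](big_cat_nat (n := hi)) //=.
suff -> : \sum_(hi <= i < hi') H i = 0 by rewrite addr0.
by rewrite big_nat big1.
Qed.

Lemma sum_restrict (C : numClosedFieldType) (lo lo2 hi2 hi : nat) (H : nat -> C) :
  (lo <= lo2)%N -> (hi2 <= hi)%N ->
  \sum_(lo <= a < hi) (if (lo2 <= a < hi2)%N then H a else 0) = \sum_(lo2 <= a < hi2) H a.
Proof.
move=> l1 l2; case: (leqP hi2 lo2) => hh.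
  rewrite (big_geq hh) big_nat big1 // => a _.
  case: ifP => // /andP[x y]; move: (leq_trans y (leq_trans hh x)).
  by rewrite ltnn.
rewrite (sum_split_lo (lo' := lo2)) //; last first.
  by move=> a /andP[_ y]; rewrite leqNgt y.
rewrite -(sum_split_hi _ (hi := hi2)) ?(ltnW hh) //; last first.
  by move=> a /andP[x _]; rewrite ltnNge x andbF.
by rewrite !big_nat; apply: eq_bigr => a ->.
Qed.

Lemma mul_congr (C : numClosedFieldType) n m u (Ups : nat -> nat -> nat -> C) y y' z z' :
  Anm_eq n y y' -> Anm_eq n z z' -> forall p,
  Anm_mul n m u Ups y z p = Anm_mul n m u Ups y' z' p.
Proof.
move=> hy hz p; rewrite /Anm_mul; apply: eq_big_nat => i hi.
apply: eq_big_nat => j hj; rewrite hy ?hz //.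
Qed.

Lemma mul_subl (C : numClosedFieldType) n m u (Ups : nat -> nat -> nat -> C) y z w p :
  Anm_mul n m u Ups (fun r => y r - z r) w p =
  Anm_mul n m u Ups y w p - Anm_mul n m u Ups z w p.
Proof.
rewrite /Anm_mul -sumrB; apply: eq_bigr => i _; rewrite -sumrB.
by apply: eq_bigr => j _; rewrite !mulrBl.
Qed.

Lemma mul_sumr (C : numClosedFieldType) n m u (Ups : nat -> nat -> nat -> C) y
  (lo hi : nat) (f : nat -> nat -> C) p :
  Anm_mul n m u Ups y (fun r => \sum_(lo <= j < hi) f j r) p =
  \sum_(lo <= j < hi) Anm_mul n m u Ups y (f j) p.
Proof.
rewrite /Anm_mul [RHS]exchange_big; apply: eq_bigr => i _.
rewrite [RHS]exchange_big; apply: eq_bigr => j _.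
by rewrite mulr_sumr mulr_suml.
Qed.

Definition Nv (C : numClosedFieldType) k m (a : nat -> nat -> C) x : nat -> C :=
  fun r => if (m < r)%N then Tco k a x r else 0.

Fixpoint NP (C : numClosedFieldType) n m u (Ups : nat -> nat -> nat -> C) k a x (j : nat)
  : nat -> C :=
  match j with
  | 0 => Anm_one C m
  | j'.+1 => Anm_mul n m u Ups (NP n m u Ups k a x j') (Nv k m a x)
  end.

Lemma one_Mc (C : numClosedFieldType) m r : Anm_one C m r = Mc m (fun _ => 1) r.
Proof. by rewrite /Anm_one /Mc; case: ifP. Qed.

Lemma Qaux_zero (C : numClosedFieldType) k m (a : nat -> nat -> C) x Ups i s :
  (0 < i)%N -> (s <= i + m)%N -> Qaux k m a x Ups i s = 0.
Proof.
case: i => [//|i] _ hs /=; rewrite big_geq //.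
Qed.

Lemma NP_supp (C : numClosedFieldType) n m u (Ups : nat -> nat -> nat -> C) k a x :
  (m <= n)%N -> (forall s, (m < s <= n)%N -> (1 <= u s <= m)%N) ->
  forall i s, ((0 < s <= m)%N -> NP n m u Ups k a x i.+1 s = 0) /\
              ((m < s <= n)%N -> NP n m u Ups k a x i.+1 s = Qaux k m a x Ups i s).
Proof.
move=> mn hu; elim=> [|i IH] s.
  have -> : NP n m u Ups k a x 1 s = Anm_mul n m u Ups (Mc m (fun _ => 1)) (Nv k m a x) s.
    by apply: mul_congr => // r _; rewrite one_Mc.
  split.
    move=> hs; rewrite mulMc //; last by case/andP: hs => -> /leq_trans ->.
    by rewrite /Nv ltnNge; case/andP: hs => _ ->; rewrite mulr0.
  move=> /andP[ms sn]; rewrite mulMc //; last by rewrite sn (leq_ltn_trans _ ms).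
  by rewrite /Nv ms mul1r.
have E : forall s, (0 < s <= n)%N ->
  NP n m u Ups k a x i.+2 s = \sum_(m.+1 <= q < s) Qaux k m a x Ups i q * Bco k m a x Ups q s.
  move=> s' /andP[s0 sn].
  rewrite -(@sum_restrict _ 1 m.+1 s' n.+1) //; last by lia.
  rewrite -[NP n m u Ups k a x i.+2 s']/(Anm_mul n m u Ups (NP n m u Ups k a x i.+1) (Nv k m a x) s').
  rewrite /Anm_mul; apply: eq_big_nat => q /andP[q0 qn].
  case: (leqP q m) => qm.
    rewrite (proj1 (IH q)) ?q0 //.
    by rewrite big1 // => b _; rewrite !mul0r.
  rewrite (proj2 (IH q)); last by rewrite qm -ltnS.
  rewrite /=; case: (ltnP q s') => qs.
    rewrite /Bco mulr_sumr -(@sum_restrict _ 1 m.+1 s' n.+1) //; last by lia.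
    apply: eq_big_nat => b /andP[b0 bn].
    rewrite /Nv /Anm_cst (leqNgt q m) qm /=.
    case: (leqP b m) => bm.
      by rewrite mulr0 mul0r.
    rewrite /= gtn_max qs /=; case: (ltnP b s') => bs; last by rewrite mulr0.
    by rewrite mulrA.
  apply: big1 => b _; rewrite /Nv /Anm_cst (leqNgt q m) qm /=.
  case: (leqP b m) => bm; first by rewrite mulr0 mul0r.
  by rewrite /= gtn_max ltnNge qs /= mulr0.
split.
  move=> /andP[s0 sm]; rewrite E ?s0 ?(leq_trans sm mn) // big_geq //; lia.
move=> /andP[ms sn]; rewrite E; last by rewrite sn; lia.
rewrite /= (@sum_split_lo _ _ (i.+2 + m - 1)) //; first lia.
move=> q hq; case: i IH E hq => [|i] IH E hq; first lia.
rewrite Qaux_zero ?mul0r //; lia.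
Qed.

Theorem lemma1 (C : numClosedFieldType) (n m k : nat)
  (u : nat -> nat) (Ups : nat -> nat -> nat -> C) (a : nat -> nat -> C)
  (x : nat -> C) (t : C) :
  (1 <= m)%N -> (m <= n)%N ->
  (* rule (3): u_s in {1,...,m} *)
  (forall s, (m < s <= n)%N -> (1 <= u s <= m)%N) ->
  (* A_n^m is a commutative associative algebra *)
  (forall y z : nat -> C, Anm_eq n (Anm_mul n m u Ups y z) (Anm_mul n m u Ups z y)) ->
  (forall y z w : nat -> C,
     Anm_eq n (Anm_mul n m u Ups (Anm_mul n m u Ups y z) w)
           (Anm_mul n m u Ups y (Anm_mul n m u Ups z w))) ->
  (2 <= k)%N -> (k <= 2 * n)%N ->
  (* e_1, ..., e_k linearly independent over R *)
  (forall c : nat -> C, (forall j, c j \is Num.real) ->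
     Anm_eq n (fun r => \sum_(1 <= j < k.+1) c j * evec m a j r) (fun _ => 0) ->
     forall j, (1 <= j <= k)%N -> c j = 0) ->
  (* zeta = sum x_j e_j in E_k *)
  (forall j, x j \is Num.real) ->
  (* t <> xi_u = f_u(zeta) *)
  (forall v, (1 <= v <= m)%N -> t != zetaA k m a x v) ->
  let w := fun r => t * evec m a 1 r - zetaA k m a x r in
  let xi := zetaA k m a x in
  let W := fun r =>
    if (r <= m)%N then (t - xi r)^-1
    else \sum_(2 <= rr < r - m + 2) Qco k m a x Ups rr r / (t - xi (u r)) ^+ rr in
  Anm_eq n (Anm_mul n m u Ups w W) (Anm_one C m) /\ Anm_eq n (Anm_mul n m u Ups W w) (Anm_one C m).
Proof.
move=> m1 mn hu hC hA k2 kn _ _ ht w xi W.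
pose d := fun v => t - xi v.
pose cp := fun (j : nat) v => (d v)^-1 ^+ j.
have hd : forall v, (0 < v <= m)%N -> d v != 0.
  by move=> v hv; rewrite /d subr_eq0; apply: ht.
have hM := fun c y p (hp : (0 < p <= n)%N) => mulMc Ups c y mn hu hp.
have hS := NP_supp Ups k a x mn hu.
pose Wsum := fun p => \sum_(0 <= j < n.+1)
   Anm_mul n m u Ups (Mc m (cp j.+1)) (NP n m u Ups k a x j) p.
have Fw : Anm_eq n w (fun r => Mc m d r - Nv k m a x r).
  move=> r /andP[r0 rn]; rewrite /w /evec eqxx /Mc /Nv /Anm_one r0 /=.
  case: (leqP r m) => rm.
    by rewrite mulr1 subr0.
  rewrite mulr0 sub0r /zetaA big_ltn; last lia.
  rewrite add0r {1}/evec eqxx /Anm_one r0 leqNgt rm /= mulr0 add0r.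
  congr (- _); apply: eq_big_nat => j /andP[j1 _].
  by rewrite /evec; case: eqP => // e; move: j1; rewrite e.
have FW : Anm_eq n W Wsum.
  move=> p hp.
  have -> : Wsum p = \sum_(0 <= j < n.+1) cp j.+1 (if (p <= m)%N then p else u p) *
      NP n m u Ups k a x j p.
    by apply: eq_bigr => j _; apply: hM.
  rewrite /W.
  have /andP[p0 pn] := hp.
  case: (leqP p m) => pm.
    rewrite big_ltn // /= /Anm_one p0 pm /= mulr1 /cp expr1 big_nat big1 ?addr0 //.
    move=> [|j] /andP[hj _] //; rewrite (proj1 (hS j p)) ?mulr0 //.
    by rewrite p0.
  have NP0 : NP n m u Ups k a x 0 p = 0 by rewrite /= /Anm_one p0 leqNgt pm.
  rewrite [RHS]big_ltn // NP0 mulr0 add0r big_add1.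
  rewrite (@eq_big_nat _ _ _ 0 n _ (fun j => cp j.+2 (u p) * Qaux k m a x Ups j p)); last first.
    by move=> j _; rewrite (proj2 (hS j p)) // pm pn.
  rewrite -{1}[2%N]/(0 + 2)%N big_addn addnK.
  rewrite (@sum_split_hi _ 0 (p - m) n); first last.
  - move=> j hj; rewrite /Qco addnK Qaux_zero ?mul0r //; lia.
  - lia.
  - lia.
  apply: eq_big_nat => j _; rewrite /Qco addnK /cp /d /xi exprVn mulrC addn2 //.
pose A := fun j => Anm_mul n m u Ups (Mc m (cp j.+1)) (NP n m u Ups k a x j).
pose B := fun j => Anm_mul n m u Ups (Mc m (cp j)) (NP n m u Ups k a x j).
have refl : forall y : nat -> C, Anm_eq n y y by [].
have mc := fun y y' z z' => @mul_congr C n m u Ups y y' z z'.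
have Ftel : forall j p, (0 < p <= n)%N ->
    Anm_mul n m u Ups w (A j) p = B j p - B j.+1 p.
  move=> j p hp.
  rewrite (mc _ _ _ _ Fw (refl (A j))) mul_subl.
  congr (_ - _).
    rewrite /A -hA //; apply: mc => // r hr.
    rewrite hM // /Mc; case/andP: hr => r0 rn; rewrite r0 /=.
    case: (leqP r m) => rm; last by rewrite mulr0.
    by rewrite /cp exprS mulrA mulfV ?mul1r // hd // r0.
  rewrite /A -hA // (mc _ _ _ _ (hC _ _) (refl _)) hA //.
  by rewrite (mc _ _ _ _ (refl _) (hC _ _)).
have Fmain : Anm_eq n (Anm_mul n m u Ups w W) (Anm_one C m).
  move=> p hp.
  rewrite (mc _ _ _ _ (refl w) FW) /Wsum mul_sumr.
  rewrite (@telescope_sumr_eq _ 0 n.+1 (fun j => - B j p)) //; last first.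
    by move=> j _; rewrite Ftel // opprK addrC.
  rewrite opprK /B hM // hM // /cp expr0 mul1r.
  have /andP[p0 pn] := hp.
  case: (leqP p m) => pm.
    by rewrite (proj1 (hS n p)) ?p0 // mulr0 oppr0 add0r.
  rewrite (proj2 (hS n p)) ?pm // Qaux_zero ?mulr0 ?oppr0 ?add0r //; lia.
split; first exact: Fmain.
by move=> p hp; rewrite hC // Fmain.
Qed.
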